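(* Let $\mathcal{X}=({\bm X},m^{\bm X}_\bullet,\nu^{\bm X})$, $\mathcal{Y}=({\bm Y},m^{\bm Y}_\bullet,\nu^{\bm Y})$ be Markov chains on finite state spaces, $C:{\bm X}\times{\bm Y}\to\mathbb{R}_+$ a cost matrix, $\delta\in(0,1]$ and $k\in\mathbb{N}\cup\{\infty\}$. Then $\lim_{\epsilon\to0}d^{\delta,(k)}_{\mathrm{WL},\epsilon}(\mathcal{X},\mathcal{Y};C)=d^{\delta,(k)}_{\mathrm{WL}}(\mathcal{X},\mathcal{Y};C)$.
   Context: For $\alpha\in\mathcal{P}({\bm X}),\beta\in\mathcal{P}({\bm Y})$, cost $D$ and $\epsilon\ge0$, the entropy-regularized OT cost is $d^{\epsilon}_{\mathrm W}(\alpha,\beta;D)=\min_{P\in\mathcal{C}(\alpha,\beta)}\sum_{i,j}P_{ij}D_{ij}+\epsilon\sum_{i,j}P_{ij}\log P_{ij}$, where $\mathcal{C}(\alpha,\beta)$ is the set of couplings (matrices with marginals $\alpha,\beta$); $d_{\mathrm W}=d^0_{\mathrm W}$ is the usual OT cost. Define $C^{\epsilon,\delta,(0)}=C$ and $C^{\epsilon,\delta,(l)}_{ij}=\delta C_{ij}+(1-\delta)d^\epsilon_{\mathrm W}(m^{\bm X}_i,m^{\bm Y}_j;C^{\epsilon,\delta,(l-1)})$; set $d^{\delta,(k)}_{\mathrm{WL},\epsilon}(\mathcal{X},\mathcal{Y};C)=d^\epsilon_{\mathrm W}(\nu^{\bm X},\nu^{\bm Y};C^{\epsilon,\delta,(k)})$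 for $k\in\mathbb{N}$ and $d^{\delta,(\infty)}_{\mathrm{WL},\epsilon}=\lim_{k\to\infty}d^{\delta,(k)}_{\mathrm{WL},\epsilon}$ (this limit exists for $\delta>0$). A Markovian coupling between $\mathcal{X}$ and $\mathcal{Y}$ is a (possibly time-inhomogeneous) Markov chain $(X_t,Y_t)_{t\in\mathbb{N}}$ on ${\bm X}\times{\bm Y}$ with $\mathrm{law}(X_0,Y_0)\in\mathcal{C}(\nu^{\bm X},\nu^{\bm Y})$ and conditional law of $(X_{t+1},Y_{t+1})$ given $(X_t,Y_t)=(x,y)$ in $\mathcal{C}(m^{\bm X}_x,m^{\bm Y}_y)$ for all $t,x,y$; $\Pi$ is their set. $d^{\delta,(k)}_{\mathrm{WL}}=\inf_{\Pi}\mathbb{E}\big[\sum_{t=0}^{k-1}\delta(1-\delta)^tC(X_t,Y_t)+(1-\delta)^kC(X_k,Y_k)\big]$ for finite $k$ and $d^{\delta,(\infty)}_{\mathrm{WL}}=\inf_{\Pi}\mathbb{E}\big[\sum_{t\ge0}\delta(1-\delta)^tC(X_t,Y_t)\big]$. *)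

(* Defs.v *)
From HB Require Import structures.
From mathcomp Require Import all_boot all_order all_algebra.
From mathcomp Require Import all_classical all_reals all_analysis.
Set Implicit Arguments. Unset Strict Implicit. Unset Printing Implicit Defensive.
Import Order.TTheory GRing.Theory Num.Theory.
Import numFieldNormedType.Exports.
Local Open Scope classical_set_scope.
Local Open Scope ring_scope.

Section WL.
Variable R : realType.

Definition prob_vec (T : finType) (p : T -> R) : Prop :=
  (forall x, 0 <= p x) /\ \sum_(x : T) p x = 1.

Definition coupling (X Y : finType) (a : X -> R) (b : Y -> R) (P : X -> Y -> R) : Prop :=
  [/\ forall x y, 0 <= P x y,
      forall x, \sum_(y : Y) P x y = a x &
      forall y, \sum_(x : X) P x y = b y].

(** entropy-regularized OT cost d^eps_W(a,b;D) (minimum written as infimum;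
    ln 0 = 0 in mathcomp-analysis, so 0 log 0 = 0) *)
Definition dW_eps (X Y : finType) (eps : R) (a : X -> R) (b : Y -> R)
  (D : X -> Y -> R) : R :=
  inf [set v | exists P, coupling a b P /\
     v = \sum_(x : X) \sum_(y : Y) (P x y * D x y + eps * (P x y * ln (P x y)))].

Fixpoint Ceps (X Y : finType) (mX : X -> X -> R) (mY : Y -> Y -> R)
  (C : X -> Y -> R) (eps delta : R) (l : nat) : X -> Y -> R :=
  match l with
  | 0 => C
  | l'.+1 => fun x y => delta * C x y +
      (1 - delta) * dW_eps eps (mX x) (mY y) (Ceps mX mY C eps delta l')
  end.

Inductive natinf := Fin of nat | Inf.

Definition dWL_eps_fin (X Y : finType) (mX : X -> X -> R) (nuX : X -> R)
  (mY : Y -> Y -> R) (nuY : Y -> R) (C : X -> Y -> R) (eps delta : R) (k : nat) : R :=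
  dW_eps eps nuX nuY (Ceps mX mY C eps delta k).

Definition dWL_eps (X Y : finType) (mX : X -> X -> R) (nuX : X -> R)
  (mY : Y -> Y -> R) (nuY : Y -> R) (C : X -> Y -> R) (eps delta : R) (k : natinf) : R :=
  match k with
  | Fin n => dWL_eps_fin mX nuX mY nuY C eps delta n
  | Inf => limn (fun n => dWL_eps_fin mX nuX mY nuY C eps delta n)
  end.

(** Markovian couplings: a (time-inhomogeneous) Markov chain on X*Y given by
    its initial law pi0 and its transition kernels K t (x,y) (x',y'). *)
Definition markov_coupling (X Y : finType) (mX : X -> X -> R) (nuX : X -> R)
  (mY : Y -> Y -> R) (nuY : Y -> R) (pi0 : X -> Y -> R)
  (K : nat -> X -> Y -> X -> Y -> R) : Prop :=
  coupling nuX nuY pi0 /\ forall t x y, coupling (mX x) (mY y) (K t x y).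

Fixpoint mlaw (X Y : finType) (pi0 : X -> Y -> R)
  (K : nat -> X -> Y -> X -> Y -> R) (t : nat) : X -> Y -> R :=
  match t with
  | 0 => pi0
  | t'.+1 => fun x' y' =>
      \sum_(x : X) \sum_(y : Y) mlaw pi0 K t' x y * K t' x y x' y'
  end.

Definition mexp (X Y : finType) (pi0 : X -> Y -> R)
  (K : nat -> X -> Y -> X -> Y -> R) (C : X -> Y -> R) (t : nat) : R :=
  \sum_(x : X) \sum_(y : Y) mlaw pi0 K t x y * C x y.

Definition dWL (X Y : finType) (mX : X -> X -> R) (nuX : X -> R)
  (mY : Y -> Y -> R) (nuY : Y -> R) (C : X -> Y -> R) (delta : R) (k : natinf) : R :=
  match k with
  | Fin n => inf [set v | exists pi0 K, markov_coupling mX nuX mY nuY pi0 K /\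
      v = \sum_(0 <= t < n) delta * (1 - delta) ^+ t * mexp pi0 K C t
          + (1 - delta) ^+ n * mexp pi0 K C n]
  | Inf => inf [set v | exists pi0 K, markov_coupling mX nuX mY nuY pi0 K /\
      v = limn (fun n => \sum_(0 <= t < n) delta * (1 - delta) ^+ t * mexp pi0 K C t)]
  end.

End WL.

(* Main.v *)
Require Import Defs.
From HB Require Import structures.
From mathcomp Require Import all_boot all_order all_algebra.
From mathcomp Require Import all_classical all_reals all_analysis.
From mathcomp Require Import ring lra.
Set Implicit Arguments. Unset Strict Implicit. Unset Printing Implicit Defensive.
Import Order.TTheory GRing.Theory Num.Theory.
Import numFieldNormedType.Exports.
Local Open Scope classical_set_scope.
Local Open Scope ring_scope.

Section Basic.
Variable R : realType.
Variables X Y : finType.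

Lemma elem_le_sum (I : finType) (F : I -> R) i :
  (forall j, 0 <= F j) -> F i <= \sum_j F j.
Proof. by move=> H; rewrite (bigD1 i) //= lerDl sumr_ge0. Qed.

Lemma plogp_bounds (p : R) : 0 <= p <= 1 -> p - 1 <= p * ln p <= 0.
Proof.
case/andP=> p0 p1; have [->|pp] := eqVneq p 0.
  by rewrite mul0r; apply/andP; split; lra.
have p0' : 0 < p by rewrite lt_def pp p0.
apply/andP; split; last by rewrite mulr_ge0_le0 // ln_le0.
have h := expR_ge1Dx (ln p^-1).
rewrite lnK ?posrE ?invr_gt0 // lnV ?posrE // in h.
have : p * (1 - ln p) <= p * p^-1 by rewrite ler_wpM2l.
rewrite mulfV // mulrBr mulr1; lra.
Qed.

Definition ocst (eps : R) (P D : X -> Y -> R) :=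
  \sum_(x : X) \sum_(y : Y) (P x y * D x y + eps * (P x y * ln (P x y))).
Definition cst0 (P D : X -> Y -> R) := \sum_(x : X) \sum_(y : Y) P x y * D x y.
Definition ent (P : X -> Y -> R) := \sum_(x : X) \sum_(y : Y) P x y * ln (P x y).
Definition NN : R := \sum_(x : X) \sum_(y : Y) (1 : R).

Lemma cstE (eps : R) P D : ocst eps P D = cst0 P D + eps * ent P.
Proof.
rewrite /ocst /cst0 /ent mulr_sumr -big_split /=; apply: eq_bigr => x _.
by rewrite mulr_sumr -big_split.
Qed.

Lemma dWE (eps : R) (a : X -> R) (b : Y -> R) D : dW_eps eps a b D =
  inf [set v | exists P, coupling a b P /\ v = ocst eps P D].
Proof. by []. Qed.

Variables (a : X -> R) (b : Y -> R).
Hypotheses (ha : prob_vec a) (hb : prob_vec b).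

Lemma coupling_le1 P : coupling a b P -> forall x y, 0 <= P x y <= 1.
Proof using ha hb.
case=> P0 Pa _ x y; rewrite P0 /=; apply: (le_trans (y := a x)).
  by rewrite -Pa elem_le_sum.
by case: ha => a0 <-; rewrite elem_le_sum.
Qed.

Lemma coupling_sum1 P : coupling a b P -> \sum_x \sum_y P x y = 1.
Proof using ha hb. by case=> _ Pa _; rewrite (eq_bigr _ (fun x _ => Pa x)); case: ha. Qed.

Lemma cst0_const P k : coupling a b P -> cst0 P (fun _ _ => k) = k.
Proof using ha hb.
move=> cP; rewrite /cst0 -[RHS]mul1r -(coupling_sum1 cP) mulr_suml.
by apply: eq_bigr => x _; rewrite mulr_suml.
Qed.

Lemma cst0_le P D D' (c : R) : coupling a b P -> (forall x y, D x y <= D' x y + c) ->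
  cst0 P D <= cst0 P D' + c.
Proof using ha hb.
move=> cP H; rewrite -[X in _ + X](cst0_const c cP) /cst0 -big_split /=.
apply: ler_sum => x _; rewrite -big_split /=; apply: ler_sum => y _.
rewrite -mulrDr ler_wpM2l //; by case/andP: (coupling_le1 cP x y).
Qed.

Lemma ent_bounds P : coupling a b P -> - NN <= ent P <= 0.
Proof using ha hb.
move=> cP; apply/andP; split.
  rewrite /NN /ent -sumrN; apply: ler_sum => x _; rewrite -sumrN.
  apply: ler_sum => y _; have := plogp_bounds (coupling_le1 cP x y).
  by case/andP: (coupling_le1 cP x y) => h0 h1; lra.
rewrite /ent; apply: sumr_le0 => x _; apply: sumr_le0 => y _.
by case/andP: (plogp_bounds (coupling_le1 cP x y)).
Qed.

Lemma prod_coupling : coupling a b (fun x y => a x * b y).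
Proof using ha hb.
case: ha => a0 a1; case: hb => b0 b1; split.
- by move=> x y; rewrite mulr_ge0.
- by move=> x; rewrite -mulr_sumr b1 mulr1.
- by move=> y; rewrite -mulr_suml a1 mul1r.
Qed.

Definition absD (D : X -> Y -> R) := \sum_x \sum_y `|D x y|.

Lemma cst_lb (eps : R) P D : 0 <= eps -> coupling a b P ->
  - absD D - eps * NN <= ocst eps P D.
Proof using ha hb.
move=> e0 cP; rewrite cstE.
have h1 : cst0 P (fun _ _ => - absD D) <= cst0 P D + 0.
  apply: cst0_le => // x y; rewrite addr0 lerNl.
  apply: (le_trans (y := `|D x y|)); first by rewrite -normrN ler_norm.
  apply: (le_trans (y := \sum_y `|D x y|)).
    by apply: (elem_le_sum (F := fun y => `|D x y|)).
  by apply: (elem_le_sum (F := fun x => \sum_y `|D x y|)) => j; apply: sumr_ge0.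
rewrite cst0_const // addr0 in h1.
have := ent_bounds cP; case/andP=> h2 h3.
have : eps * (- NN) <= eps * ent P by rewrite ler_wpM2l.
lra.
Qed.

Lemma Sset_lb (eps : R) D : 0 <= eps ->
  has_lbound [set v | exists P, coupling a b P /\ v = ocst eps P D].
Proof using ha hb. by move=> e0; exists (- absD D - eps * NN) => v [P [cP ->]]; apply: cst_lb. Qed.

Lemma Sset_ne (eps : R) D :
  [set v | exists P, coupling a b P /\ v = ocst eps P D] !=set0.
Proof using ha hb. by eexists; exists (fun x y => a x * b y); split; [apply: prod_coupling|]. Qed.

Lemma dW_le_cst (eps : R) P D : 0 <= eps -> coupling a b P -> dW_eps eps a b D <= ocst eps P D.
Proof using ha hb. by move=> e0 cP; rewrite dWE; apply: ge_inf; [apply: Sset_lb|exists P]. Qed.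

Lemma dW_near (eps : R) D eta : 0 <= eps -> 0 < eta ->
  exists P, coupling a b P /\ ocst eps P D < dW_eps eps a b D + eta.
Proof using ha hb.
move=> e0 et; have [v [P [cP ->]] h] := inf_adherent et (conj (Sset_ne eps D) (Sset_lb D e0)).
by exists P.
Qed.

Lemma dW_cmp (e1 e2 : R) D1 D2 (c : R) : 0 <= e1 ->
  (forall P, coupling a b P -> ocst e1 P D1 <= ocst e2 P D2 + c) ->
  dW_eps e1 a b D1 <= dW_eps e2 a b D2 + c.
Proof using ha hb.
move=> e0 H; rewrite -lerBlDr [dW_eps e2 _ _ _]dWE; apply: lb_le_inf.
  exact: Sset_ne.
move=> v [P [cP ->]]; rewrite lerBlDr; apply: le_trans (H P cP).
exact: dW_le_cst.
Qed.

Lemma dW_lip (eps : R) D1 D2 (c : R) : 0 <= eps -> (forall x y, D1 x y <= D2 x y + c) ->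
  dW_eps eps a b D1 <= dW_eps eps a b D2 + c.
Proof using ha hb.
move=> e0 H; apply: dW_cmp => // P cP; rewrite !cstE.
have := cst0_le cP H; lra.
Qed.

Lemma dW_eps_le0 (eps : R) D1 D2 (c : R) : 0 <= eps -> (forall x y, D1 x y <= D2 x y + c) ->
  dW_eps eps a b D1 <= dW_eps 0 a b D2 + c.
Proof using ha hb.
move=> e0 H; apply: dW_cmp => // P cP; rewrite !cstE mul0r addr0.
have := cst0_le cP H; have := ent_bounds cP; case/andP=> h1 h2.
have : eps * ent P <= eps * 0 by rewrite ler_wpM2l.
lra.
Qed.

Lemma dW_0_le_eps (eps : R) D1 D2 (c : R) : 0 <= eps -> (forall x y, D1 x y <= D2 x y + c) ->
  dW_eps 0 a b D1 <= dW_eps eps a b D2 + (c + eps * NN).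
Proof using ha hb.
move=> e0 H; apply: dW_cmp => // P cP; rewrite !cstE mul0r addr0.
have := cst0_le cP H; have := ent_bounds cP; case/andP=> h1 h2.
have : eps * (- NN) <= eps * ent P by rewrite ler_wpM2l.
lra.
Qed.

Lemma NN_ge0 : 0 <= NN.
Proof. by apply: sumr_ge0 => x _; apply: sumr_ge0. Qed.

Lemma dW_lip_abs (eps : R) D1 D2 (c : R) : 0 <= eps -> (forall x y, `|D1 x y - D2 x y| <= c) ->
  `|dW_eps eps a b D1 - dW_eps eps a b D2| <= c.
Proof using ha hb.
move=> e0 H; rewrite ler_norml.
have h1 : dW_eps eps a b D1 <= dW_eps eps a b D2 + c.
  by apply: dW_lip => // x y; have := H x y; rewrite ler_norml; lra.
have h2 : dW_eps eps a b D2 <= dW_eps eps a b D1 + c.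
  by apply: dW_lip => // x y; have := H x y; rewrite ler_norml; lra.
lra.
Qed.

Lemma dW_eps_abs (eps : R) D1 D2 (c : R) : 0 <= eps -> (forall x y, `|D1 x y - D2 x y| <= c) ->
  `|dW_eps eps a b D1 - dW_eps 0 a b D2| <= c + eps * NN.
Proof using ha hb.
move=> e0 H; rewrite ler_norml.
have h1 : dW_eps eps a b D1 <= dW_eps 0 a b D2 + c.
  by apply: dW_eps_le0 => // x y; have := H x y; rewrite ler_norml; lra.
have h2 : dW_eps 0 a b D2 <= dW_eps eps a b D1 + (c + eps * NN).
  by apply: dW_0_le_eps => // x y; have := H x y; rewrite ler_norml; lra.
have : 0 <= eps * NN by rewrite mulr_ge0 // NN_ge0.
lra.
Qed.

Lemma cst0E P D : ocst 0 P D = cst0 P D.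
Proof. by rewrite cstE mul0r addr0. Qed.

End Basic.


Section Geo.
Variable R : realType.

Lemma geo_le (x y c q : R) : 0 <= q < 1 ->
  (forall n, x <= y + c * q ^+ n) -> x <= y.
Proof.
case/andP=> q0 q1 H.
have cv : (fun n => y + c * q ^+ n) @ \oo --> y + c * 0.
  apply: cvgD; first exact: cvg_cst.
  apply: cvgMr; apply: cvg_expr; rewrite ger0_norm //.
rewrite mulr0 addr0 in cv.
rewrite -(cvg_lim _ cv) //; apply: limr_ge; first by apply/cvg_ex; exists y.
by apply: nearW.
Qed.

Variable d : R.
Hypothesis hd : 0 < d <= 1.

Lemma geo_cvg (f : nat -> R) B :
  (forall n, `|f n.+1 - f n| <= B * (1 - d) ^+ n) ->
  cvgn f /\ forall n, `|limn f - f n| <= B * (1 - d) ^+ n / d.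
Proof.
move=> H; have d0 : 0 < d by case/andP: hd.
have dn0 : d != 0 by rewrite gt_eqF.
have q0 : 0 <= 1 - d by case/andP: hd => _ h; lra.
have B0 : 0 <= B by have := H 0%N; rewrite expr0 mulr1; apply: le_trans.
have tele : forall n m, `|f (n + m)%N - f n| <= B * ((1 - d) ^+ n - (1 - d) ^+ (n + m)) / d.
  move=> n; elim=> [|m IH]; first by rewrite addn0 subrr normr0 subrr mulr0 mul0r.
  rewrite addnS; apply: (le_trans (ler_distD (f (n + m)%N) _ _)).
  apply: (le_trans (lerD (H (n + m)%N) IH)).
  set t := (1 - d) ^+ (n + m); rewrite exprS.
  have -> : B * t + B * ((1 - d) ^+ n - t) / d = B * ((1 - d) ^+ n - (1 - d) * t) / d.
    by field.
  by [].
have tele0 : forall m, f 0%N - B / d <= f m.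
  move=> m; have := tele 0%N m; rewrite add0n expr0 => h.
  have h2 : B * (1 - (1 - d) ^+ m) / d <= B / d.
    rewrite ler_pM2r ?invr_gt0 // -[leRHS]mulr1 ler_wpM2l // lerBlDr lerDl exprn_ge0 //.
  move: h; rewrite ler_norml; lra.
pose g n := f n + B * (1 - d) ^+ n / d.
have gni : nonincreasing_seq g.
  apply/nonincreasing_seqP => n; rewrite /g exprS.
  have := H n; rewrite ler_norml => /andP[_ h].
  have -> : B * ((1 - d) * (1 - d) ^+ n) / d = B * (1 - d) ^+ n / d - B * (1 - d) ^+ n.
    by field.
  lra.
have glb : has_lbound (range g).
  exists (f 0%N - B / d) => _ [n _ <-]; rewrite /g.
  have : 0 <= B * (1 - d) ^+ n / d by rewrite mulr_ge0 ?invr_ge0 ?mulr_ge0 ?exprn_ge0 // ltW.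
  have := tele0 n; lra.
have cg : cvgn g := nonincreasing_is_cvgn gni glb.
have cf : cvgn f.
  have -> : f = fun n => g n - (B / d) * (1 - d) ^+ n.
    by apply: funext => n; rewrite /g; field.
  apply/cvg_ex; exists (limn g - (B / d) * 0); apply: cvgB => //.
  apply: cvgMr; apply: cvg_expr; rewrite ger0_norm //; lra.
split => // n; rewrite ler_norml; apply/andP; split.
- rewrite lerBrDl; apply: limr_ge => //.
  exists n => // m /= nm; rewrite -(subnKC nm).
  have := tele n (m - n)%N; rewrite ler_norml => /andP[h _].
  have : 0 <= B * (1 - d) ^+ (n + (m - n)) / d.
    by rewrite mulr_ge0 ?invr_ge0 ?mulr_ge0 ?exprn_ge0 // ltW.
  move: h; rewrite mulrBr mulrBl; lra.
- rewrite lerBlDl; apply: limr_le => //.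
  exists n => // m /= nm; rewrite -(subnKC nm).
  have := tele n (m - n)%N; rewrite ler_norml => /andP[_ h].
  have : 0 <= B * (1 - d) ^+ (n + (m - n)) / d.
    by rewrite mulr_ge0 ?invr_ge0 ?mulr_ge0 ?exprn_ge0 // ltW.
  move: h; rewrite mulrBr mulrBl; lra.
Qed.

End Geo.


Section CepsB.
Variable R : realType.
Variables X Y : finType.
Variables (mX : X -> X -> R) (mY : Y -> Y -> R) (C : X -> Y -> R) (delta : R).
Hypotheses (hmX : forall x, prob_vec (mX x)) (hmY : forall y, prob_vec (mY y)).
Hypothesis hd : 0 < delta <= 1.

Lemma absD_elem (D : X -> Y -> R) x y : `|D x y| <= absD D.
Proof.
apply: (le_trans (y := \sum_y `|D x y|)).
  by apply: (elem_le_sum (F := fun y => `|D x y|)).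
by apply: (elem_le_sum (F := fun x => \sum_y `|D x y|)) => j; apply: sumr_ge0.
Qed.

Notation V eps l := (Ceps mX mY C eps delta l).

Lemma Ceps_eps (eps : R) l x y : 0 <= eps ->
  `|V eps l x y - V 0 l x y| <= eps * NN R X Y / delta.
Proof.
move=> e0; have d0 : 0 < delta by case/andP: hd.
have K0 : 0 <= eps * NN R X Y / delta.
  by rewrite mulr_ge0 ?invr_ge0 ?mulr_ge0 ?NN_ge0 // ltW.
elim: l x y => [|l IH] x y; first by rewrite subrr normr0.
rewrite [V eps l.+1 x y]/= [V 0 l.+1 x y]/=.
have -> : forall u v w : R, u + v - (u + w) = v - w by move=> u v w; ring.
rewrite -mulrBr.
have h := dW_eps_abs (hmX x) (hmY y) e0 IH.
rewrite normrM ger0_norm; last by case/andP: hd => _ h1; lra.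
set K := eps * NN R X Y / delta in K0 h *.
have e : eps * NN R X Y = K * delta by rewrite /K; field; rewrite gt_eqF.
rewrite e in h.
set z := `| _ | in h *.
have z0 : 0 <= z by apply: normr_ge0.
case/andP: hd => _ h1; nra.
Qed.

Definition Bc eps := absD (fun x y => V eps 1 x y - C x y).

Lemma Ceps_contr (eps : R) l x y : 0 <= eps ->
  `|V eps l.+1 x y - V eps l x y| <= Bc eps * (1 - delta) ^+ l.
Proof.
move=> e0; elim: l x y => [|l IH] x y.
  by rewrite expr0 mulr1; apply: (absD_elem (fun x y => V eps 1 x y - C x y)).
rewrite [V eps l.+2 x y]/= [V eps l.+1 x y]/=.
have -> : forall u v w : R, u + v - (u + w) = v - w by move=> u v w; ring.
have q0 : 0 <= 1 - delta by case/andP: hd => _ h1; lra.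
rewrite -mulrBr normrM (ger0_norm q0) exprS mulrCA ler_wpM2l //.
apply: (dW_lip_abs (hmX x) (hmY y) e0) => u v; exact: IH.
Qed.

End CepsB.


Section DP.
Variable R : realType.
Variables X Y : finType.
Variables (mX : X -> X -> R) (mY : Y -> Y -> R) (C : X -> Y -> R) (delta : R).
Hypotheses (hmX : forall x, prob_vec (mX x)) (hmY : forall y, prob_vec (mY y)).
Hypothesis hd : 0 < delta <= 1.
Hypothesis hC : forall x y, 0 <= C x y.

Fixpoint Wb (K : nat -> X -> Y -> X -> Y -> R) (G : X -> Y -> R) (m s : nat)
  {struct m} : X -> Y -> R :=
  match m with
  | 0 => G
  | m'.+1 => fun x y => delta * C x y + (1 - delta) *
      \sum_(x' : X) \sum_(y' : Y) K s x y x' y' * Wb K G m' s.+1 x' y'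
  end.

Fixpoint Vg (G : X -> Y -> R) (m : nat) : X -> Y -> R :=
  match m with
  | 0 => G
  | m'.+1 => fun x y => delta * C x y + (1 - delta) * dW_eps 0 (mX x) (mY y) (Vg G m')
  end.

Lemma VgE m : Vg C m = Ceps mX mY C 0 delta m.
Proof. by elim: m => //= m ->. Qed.

Lemma swap4 (H : X -> Y -> X -> Y -> R) :
  \sum_x \sum_y \sum_x' \sum_y' H x y x' y' = \sum_x' \sum_y' \sum_x \sum_y H x y x' y'.
Proof.
under eq_bigr => x _ do rewrite exchange_big.
rewrite exchange_big; apply: eq_bigr => x' _.
under eq_bigr => x _ do rewrite exchange_big.
by rewrite exchange_big.
Qed.

Lemma mlaw_step pi0 K s (F : X -> Y -> R) :
  \sum_x \sum_y mlaw pi0 K s x y * (\sum_x' \sum_y' K s x y x' y' * F x' y') =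
  \sum_x' \sum_y' mlaw pi0 K s.+1 x' y' * F x' y'.
Proof.
transitivity (\sum_x \sum_y \sum_x' \sum_y' mlaw pi0 K s x y * K s x y x' y' * F x' y').
  apply: eq_bigr => x _; apply: eq_bigr => y _; rewrite mulr_sumr.
  apply: eq_bigr => x' _; rewrite mulr_sumr; apply: eq_bigr => y' _.
  by rewrite mulrA.
rewrite swap4 /=; apply: eq_bigr => x' _; apply: eq_bigr => y' _.
rewrite mulr_suml; apply: eq_bigr => x _; by rewrite mulr_suml.
Qed.

Lemma FB pi0 K G m s :
  \sum_x \sum_y mlaw pi0 K s x y * Wb K G m s x y =
  \sum_(0 <= t < m) delta * (1 - delta) ^+ t * mexp pi0 K C (s + t) +
  (1 - delta) ^+ m * \sum_x \sum_y mlaw pi0 K (s + m) x y * G x y.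
Proof.
elim: m s => [|m IH] s.
  by rewrite big_geq // add0r expr0 mul1r addn0.
rewrite big_nat_recl // addn0.
transitivity (delta * mexp pi0 K C s + (1 - delta) *
  \sum_x \sum_y mlaw pi0 K s.+1 x y * Wb K G m s.+1 x y).
  rewrite -mlaw_step mulr_sumr /mexp mulr_sumr -big_split /=.
  apply: eq_bigr => x _; rewrite !mulr_sumr -big_split /=; apply: eq_bigr => y _.
  by rewrite /=; ring.
rewrite IH expr0 mulr1 -addrA; congr (_ + _).
have -> : \sum_(0 <= i < m) delta * (1 - delta) ^+ i.+1 * mexp pi0 K C (s + i.+1) =
  (1 - delta) * \sum_(0 <= t < m) delta * (1 - delta) ^+ t * mexp pi0 K C (s.+1 + t).
  rewrite mulr_sumr; apply: eq_bigr => t _; rewrite addSnnS exprS; ring.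
rewrite -addSnnS exprS; ring.
Qed.

Lemma Wb_lb K G : (forall t x y, coupling (mX x) (mY y) (K t x y)) ->
  forall m s x y, Vg G m x y <= Wb K G m s x y.
Proof.
move=> cK; elim=> [|m IH] s x y /=; first by [].
have q0 : 0 <= 1 - delta by case/andP: hd => _ h1; lra.
rewrite lerD2l ler_wpM2l //.
apply: (le_trans (dW_le_cst (hmX x) (hmY y) (Vg G m) (lexx 0) (cK s x y))).
rewrite cst0E -[X in _ <= X]addr0; apply: (cst0_le (hmX x) (hmY y) (cK s x y) (D' := Wb K G m s.+1)).
by move=> u v; rewrite addr0 IH.
Qed.

Lemma Wb_ub_fin (Kopt : nat -> X -> Y -> X -> Y -> R) n eta :
  0 <= eta ->
  (forall m x y, coupling (mX x) (mY y) (Kopt m x y)) ->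
  (forall m x y, cst0 (Kopt m x y) (Vg C m) <= dW_eps 0 (mX x) (mY y) (Vg C m) + eta) ->
  forall m s, (s + m)%N = n -> forall x y,
  Wb (fun t => Kopt (n - t.+1)%N) C m s x y <= Vg C m x y + m%:R * eta.
Proof.
move=> et cK hK; elim=> [|m IH] s hs x y /=; first by rewrite mul0r addr0.
have q0 : 0 <= 1 - delta by case/andP: hd => _ h1; lra.
have -> : (n - s.+1 = m)%N by rewrite -hs addnS subSS addKn.
have h1 : cst0 (Kopt m x y) (Wb (fun t => Kopt (n - t.+1)%N) C m s.+1)
     <= cst0 (Kopt m x y) (Vg C m) + m%:R * eta.
  apply: (cst0_le (hmX x) (hmY y) (cK m x y)) => u v; apply: IH; by rewrite addSnnS.
have h2 := hK m x y.
rewrite /cst0 in h1 h2.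
set A := \sum_x' _ in h1 *.
set Dv := dW_eps _ _ _ _ in h2 *.
have z0 : 0 <= m%:R * eta by rewrite mulr_ge0.
rewrite -natr1 mulrDl mul1r.
case/andP: hd => d0 d1; nra.
Qed.

Lemma Wb_ub_inf K (F : X -> Y -> R) eta A :
  (forall t x y, coupling (mX x) (mY y) (K t x y)) ->
  (forall t x y, cst0 (K t x y) F <= dW_eps 0 (mX x) (mY y) F + eta) ->
  (forall x y, delta * C x y + (1 - delta) * dW_eps 0 (mX x) (mY y) F <= F x y) ->
  (forall x y, 0 <= F x y + A) -> (1 - delta) * (eta + A) <= A ->
  forall m s x y, Wb K (fun _ _ => 0) m s x y <= F x y + A.
Proof.
move=> cK hK hF F0 hA; elim=> [|m IH] s x y /=; first by apply: F0.
have q0 : 0 <= 1 - delta by case/andP: hd => _ h1; lra.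
have h1 : cst0 (K s x y) (Wb K (fun _ _ => 0) m s.+1) <= cst0 (K s x y) F + A.
  by apply: (cst0_le (hmX x) (hmY y) (cK s x y)) => u v; apply: IH.
have h2 := hK s x y.
have h3 := hF x y.
rewrite /cst0 in h1 h2.
set B := \sum_x' _ in h1 *.
set Dv := dW_eps _ _ _ _ in h2 h3 *.
have : (1 - delta) * B <= (1 - delta) * (Dv + eta + A).
  by rewrite ler_wpM2l //; lra.
lra.
Qed.

End DP.


Lemma inf_eq (R : realType) (T : set R) z :
  (forall v, T v -> z <= v) -> (forall e, 0 < e -> exists v, T v /\ v <= z + e) ->
  inf T = z.
Proof.
move=> lb ub; apply/eqP; rewrite eq_le; apply/andP; split.
  apply/ler_addgt0Pr => e e0; have [v [Tv ve]] := ub e e0.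
  by apply: le_trans ve; apply: ge_inf => //; exists z.
apply: lb_le_inf => //; have [v [Tv _]] := ub 1 ltr01; by exists v.
Qed.

Section Main.
Variable R : realType.
Variables X Y : finType.
Variables (mX : X -> X -> R) (nuX : X -> R) (mY : Y -> Y -> R) (nuY : Y -> R).
Variables (C : X -> Y -> R) (delta : R).
Hypotheses (hnuX : prob_vec nuX) (hmX : forall x, prob_vec (mX x)).
Hypotheses (hnuY : prob_vec nuY) (hmY : forall y, prob_vec (mY y)).
Hypothesis hC : forall x y, 0 <= C x y.
Hypothesis hd : 0 < delta <= 1.

Let d0 : 0 < delta. Proof. by case/andP: hd. Qed.
Let q0 : 0 <= 1 - delta. Proof. by case/andP: hd => _ h; lra. Qed.
Let q1 : 0 <= 1 - delta < 1.
Proof. by apply/andP; split; [exact: q0 | case/andP: hd => h _; lra]. Qed.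

Notation V0 l := (Ceps mX mY C 0 delta l).
Notation B0 := (Bc mX mY C delta 0).

Definition Vinf x y := limn (fun l => V0 l x y).

Lemma Vinf_tail x y l : `|Vinf x y - V0 l x y| <= B0 * (1 - delta) ^+ l / delta.
Proof.
have [_ h] := geo_cvg hd (f := fun l => V0 l x y) (B := B0)
  (fun n => Ceps_contr C hmX hmY hd n x y (lexx (0:R))).
exact: h.
Qed.

Lemma B0_ge0 : 0 <= B0.
Proof. by apply: sumr_ge0 => x _; apply: sumr_ge0 => y _. Qed.

Lemma dW0_ge0 (a : X -> R) (b : Y -> R) D : prob_vec a -> prob_vec b ->
  (forall x y, 0 <= D x y) -> 0 <= dW_eps 0 a b D.
Proof.
move=> ha hb hD; rewrite dWE; apply: lb_le_inf; first exact: Sset_ne.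
move=> v [P [cP ->]]; rewrite cst0E; apply: sumr_ge0 => x _; apply: sumr_ge0 => y _.
by case: cP => P0 _ _; rewrite mulr_ge0.
Qed.

Lemma V0_ge0 l x y : 0 <= V0 l x y.
Proof.
elim: l x y => [|l IH] x y //=.
by rewrite addr_ge0 ?mulr_ge0 ?(ltW d0) // dW0_ge0.
Qed.

Lemma Vinf_ge0 x y : 0 <= Vinf x y.
Proof.
apply: (geo_le (c := B0 / delta) q1) => n.
have := Vinf_tail x y n; have := V0_ge0 n x y; rewrite ler_norml => h /andP[h1 h2].
by rewrite mulrAC; lra.
Qed.

Lemma Vinf_fp x y :
  delta * C x y + (1 - delta) * dW_eps 0 (mX x) (mY y) Vinf <= Vinf x y.
Proof.
apply: (geo_le (c := 2 * B0 / delta) q1) => l.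
have h1 : dW_eps 0 (mX x) (mY y) Vinf <= dW_eps 0 (mX x) (mY y) (V0 l) + B0 * (1 - delta) ^+ l / delta.
  apply: (dW_lip (hmX x) (hmY y) (lexx (0:R))) => u v.
  by have := Vinf_tail u v l; rewrite ler_norml; lra.
have h2 := Vinf_tail x y l.+1; rewrite ler_norml in h2.
have e : V0 l.+1 x y = delta * C x y + (1 - delta) * dW_eps 0 (mX x) (mY y) (V0 l) by [].
rewrite e in h2.
set u := B0 * (1 - delta) ^+ l / delta in h1 *.
have u0 : 0 <= u by rewrite /u mulr_ge0 ?invr_ge0 ?mulr_ge0 ?B0_ge0 ?exprn_ge0 // ltW.
have eu : B0 * (1 - delta) ^+ l.+1 / delta = (1 - delta) * u by rewrite /u exprS; ring.
rewrite eu in h2.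
have -> : 2 * B0 / delta * (1 - delta) ^+ l = 2 * u by rewrite /u; ring.
have : (1 - delta) * dW_eps 0 (mX x) (mY y) Vinf <= (1 - delta) * (dW_eps 0 (mX x) (mY y) (V0 l) + u).
  by rewrite ler_wpM2l.
have : (1 - delta) * u <= u by rewrite -[leRHS]mul1r ler_wpM2r //; have := d0; lra.
case/andP: h2 => h2 _.
lra.
Qed.

Lemma dWL_fin n : dWL mX nuX mY nuY C delta (Fin n) = dW_eps 0 nuX nuY (V0 n).
Proof.
rewrite /=; apply: inf_eq.
  move=> v [pi0 [K [[cpi cK] ->]]].
  have -> : \sum_(0 <= t < n) delta * (1 - delta) ^+ t * mexp pi0 K C t
      + (1 - delta) ^+ n * mexp pi0 K C n
      = \sum_x \sum_y pi0 x y * Wb C delta K C n 0 x y := esym (FB C delta pi0 K C n 0).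
  apply: le_trans (dW_le_cst hnuX hnuY (V0 n) (lexx (0:R)) cpi) _.
  rewrite cst0E -[leRHS]addr0; apply: (cst0_le hnuX hnuY cpi) => x y.
  by rewrite addr0 -VgE; apply: (Wb_lb C hmX hmY hd C cK).
move=> e e0.
have n0 : 0 < n.+1%:R :> R by rewrite ltr0n.
pose eta := e / n.+1%:R.
have et : 0 < eta by rewrite /eta divr_gt0.
have hK : forall p : nat * X * Y, exists P, coupling (mX p.1.2) (mY p.2) P /\
    ocst 0 P (Vg mX mY C delta C p.1.1) <
    dW_eps 0 (mX p.1.2) (mY p.2) (Vg mX mY C delta C p.1.1) + eta.
  move=> [[m x] y] /=; exact: (dW_near (hmX x) (hmY y) (Vg mX mY C delta C m) (lexx (0:R)) et).
have [f hf] := choice hK.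
pose Kopt m x y := f (m, x, y).
have [pi0 [cpi hpi]] := dW_near hnuX hnuY (V0 n) (lexx (0:R)) et.
pose K := fun t => Kopt (n - t.+1)%N.
have cK : forall m x y, coupling (mX x) (mY y) (Kopt m x y).
  by move=> m x y; exact: (hf (m, x, y)).1.
eexists; split.
  exists pi0, K; split; first by split => // t x y; apply: cK.
  reflexivity.
have -> : \sum_(0 <= t < n) delta * (1 - delta) ^+ t * mexp pi0 K C t
    + (1 - delta) ^+ n * mexp pi0 K C n
    = \sum_x \sum_y pi0 x y * Wb C delta K C n 0 x y := esym (FB C delta pi0 K C n 0).
have hK' : forall m x y, cst0 (Kopt m x y) (Vg mX mY C delta C m) <=
    dW_eps 0 (mX x) (mY y) (Vg mX mY C delta C m) + eta.
  by move=> m x y; rewrite -cst0E; apply: ltW; exact: (hf (m, x, y)).2.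
have h1 : cst0 pi0 (Wb C delta K C n 0) <= cst0 pi0 (Vg mX mY C delta C n) + n%:R * eta.
  apply: (cst0_le hnuX hnuY cpi) => x y.
  exact: (Wb_ub_fin hmX hmY hd (ltW et) cK hK' (m := n) (s := 0%N) (erefl _)).
have h3 : cst0 pi0 (V0 n) = ocst 0 pi0 (V0 n) by rewrite cst0E.
rewrite VgE h3 /cst0 in h1.
have -> : e = eta + n%:R * eta by rewrite /eta -natr1; field; rewrite gt_eqF.
lra.
Qed.

Lemma mlaw_ge0 pi0 K : coupling nuX nuY pi0 ->
  (forall t x y, coupling (mX x) (mY y) (K t x y)) ->
  forall t x y, 0 <= mlaw pi0 K t x y.
Proof.
move=> [P0 _ _] cK; elim=> [|t IH] x y //=.
apply: sumr_ge0 => u _; apply: sumr_ge0 => v _; rewrite mulr_ge0 //.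
by case: (cK t u v).
Qed.

Lemma absDC_ge0 : 0 <= absD C.
Proof. by apply: sumr_ge0 => x _; apply: sumr_ge0 => y _. Qed.

Lemma C_le_absD x y : C x y <= absD C.
Proof. by have := absD_elem C x y; rewrite ger0_norm. Qed.

Lemma Wb0_ub K : (forall t x y, coupling (mX x) (mY y) (K t x y)) ->
  forall m s x y, Wb C delta K (fun _ _ => 0) m s x y <= absD C.
Proof.
move=> cK; elim=> [|m IH] s x y /=; first exact: absDC_ge0.
have h1 : cst0 (K s x y) (Wb C delta K (fun _ _ => 0) m s.+1) <=
    cst0 (K s x y) (fun _ _ => absD C) + 0.
  by apply: (cst0_le (hmX x) (hmY y) (cK s x y)) => u v; rewrite addr0 IH.
rewrite (cst0_const (hmX x) (hmY y) _ (cK s x y)) addr0 /cst0 in h1.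
have h2 := C_le_absD x y.
have : (1 - delta) * (\sum_x' \sum_y' K s x y x' y' * Wb C delta K (fun _ _ => 0) m s.+1 x' y')
   <= (1 - delta) * absD C by rewrite ler_wpM2l.
have : delta * C x y <= delta * absD C by rewrite ler_wpM2l // ltW.
lra.
Qed.

Lemma Vg_close n x y :
  `|Vg mX mY C delta (fun _ _ => 0) n x y - Vg mX mY C delta C n x y| <=
  (1 - delta) ^+ n * absD C.
Proof.
elim: n x y => [|n IH] x y.
  by rewrite /= expr0 mul1r sub0r normrN; apply: (absD_elem C).
rewrite [Vg _ _ _ _ _ n.+1 x y]/= [Vg _ _ _ _ C n.+1 x y]/=.
have -> : forall u v w : R, u + v - (u + w) = v - w by move=> u v w; ring.
rewrite -mulrBr normrM (ger0_norm q0) exprS -mulrA ler_wpM2l //.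
by apply: (dW_lip_abs (hmX x) (hmY y) (lexx (0:R))) => u v; exact: IH.
Qed.

Definition Sdef pi0 K n := \sum_(0 <= t < n) delta * (1 - delta) ^+ t * mexp pi0 K C t.

Lemma S_props pi0 K : markov_coupling mX nuX mY nuY pi0 K ->
  [/\ forall n, Sdef pi0 K n =
        \sum_x \sum_y pi0 x y * Wb C delta K (fun _ _ => 0) n 0 x y,
      nondecreasing_seq (Sdef pi0 K) & cvgn (Sdef pi0 K)].
Proof.
move=> [cpi cK].
have SE : forall n, Sdef pi0 K n =
    \sum_x \sum_y pi0 x y * Wb C delta K (fun _ _ => 0) n 0 x y.
  move=> n; have e := FB C delta pi0 K (fun _ _ => 0) n 0.
  have z : \sum_x \sum_y mlaw pi0 K (0 + n) x y * (fun _ _ => 0) x y = 0 :> R.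
    by rewrite big1 // => x _; rewrite big1 // => y _; rewrite mulr0.
  by rewrite z mulr0 addr0 in e; exact: esym e.
have nd : nondecreasing_seq (Sdef pi0 K).
  apply/nondecreasing_seqP => n; rewrite /Sdef big_nat_recr //= lerDl.
  rewrite mulr_ge0 ?mulr_ge0 ?exprn_ge0 ?(ltW d0) //.
  apply: sumr_ge0 => x _; apply: sumr_ge0 => y _.
  by rewrite mulr_ge0 // (mlaw_ge0 cpi cK).
split => //; apply: nondecreasing_is_cvgn => //.
exists (absD C) => _ [n _ <-]; rewrite SE.
have h : cst0 pi0 (Wb C delta K (fun _ _ => 0) n 0) <= cst0 pi0 (fun _ _ => absD C) + 0.
  by apply: (cst0_le hnuX hnuY cpi) => u v; rewrite addr0 (Wb0_ub cK).
by rewrite (cst0_const hnuX hnuY _ cpi) addr0 in h.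
Qed.

Lemma dWL_inf : dWL mX nuX mY nuY C delta Inf = dW_eps 0 nuX nuY Vinf.
Proof.
rewrite /=; apply: inf_eq.
  move=> v [pi0 [K [mc ->]]]; change (dW_eps 0 nuX nuY Vinf <= limn (Sdef pi0 K)).
  have [SE nd cS] := S_props mc; case: mc => cpi cK.
  apply: (geo_le (c := absD C + B0 / delta) q1) => n.
  have h1 := nondecreasing_cvgn_le nd cS n.
  have h2 : dW_eps 0 nuX nuY (Vg mX mY C delta (fun _ _ => 0) n) <= Sdef pi0 K n.
    rewrite SE; apply: le_trans (dW_le_cst hnuX hnuY _ (lexx (0:R)) cpi) _.
    rewrite cst0E -[leRHS]addr0; apply: (cst0_le hnuX hnuY cpi) => x y.
    by rewrite addr0; apply: (Wb_lb C hmX hmY hd _ cK).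
  have h3 : dW_eps 0 nuX nuY Vinf <= dW_eps 0 nuX nuY (Vg mX mY C delta (fun _ _ => 0) n)
      + (absD C + B0 / delta) * (1 - delta) ^+ n.
    apply: (dW_lip hnuX hnuY (lexx (0:R))) => x y.
    have := Vinf_tail x y n; have := Vg_close n x y; rewrite VgE !ler_norml.
    move=> /andP[a1 a2] /andP[b1 b2].
    have -> : (absD C + B0 / delta) * (1 - delta) ^+ n =
      (1 - delta) ^+ n * absD C + B0 * (1 - delta) ^+ n / delta by ring.
    lra.
  lra.
move=> e e0.
pose eta := e * delta / 2.
have et : 0 < eta by rewrite /eta divr_gt0 // mulr_gt0.
pose A := eta / delta.
have A0 : 0 <= A by rewrite /A divr_ge0 // ltW.
have hK : forall p : X * Y, exists P, coupling (mX p.1) (mY p.2) P /\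
    ocst 0 P Vinf < dW_eps 0 (mX p.1) (mY p.2) Vinf + eta.
  move=> [x y] /=; exact: (dW_near (hmX x) (hmY y) Vinf (lexx (0:R)) et).
have [f hf] := choice hK.
pose K := fun (t : nat) x y => f (x, y).
have cK : forall t x y, coupling (mX x) (mY y) (K t x y).
  by move=> t x y; exact: (hf (x, y)).1.
have hK' : forall t x y, cst0 (K t x y) Vinf <= dW_eps 0 (mX x) (mY y) Vinf + eta.
  by move=> t x y; rewrite -cst0E; apply: ltW; exact: (hf (x, y)).2.
have [pi0 [cpi hpi]] := dW_near hnuX hnuY Vinf (lexx (0:R)) et.
have mc : markov_coupling mX nuX mY nuY pi0 K by split.
exists (limn (Sdef pi0 K)); split; first by exists pi0, K; split.
have [SE nd cS] := S_props mc.
have hA : (1 - delta) * (eta + A) <= A.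
  have -> : (1 - delta) * (eta + A) = A - delta * eta by rewrite /A; field; rewrite gt_eqF.
  by rewrite lerBlDr lerDl mulr_ge0 // ltW.
have F0 : forall x y, 0 <= Vinf x y + A by move=> x y; rewrite addr_ge0 // Vinf_ge0.
have hb : forall n, Sdef pi0 K n <= dW_eps 0 nuX nuY Vinf + eta + A.
  move=> n; rewrite SE.
  have h : cst0 pi0 (Wb C delta K (fun _ _ => 0) n 0) <= cst0 pi0 Vinf + A.
    apply: (cst0_le hnuX hnuY cpi) => x y.
    exact: (Wb_ub_inf hmX hmY hd cK hK' Vinf_fp F0 hA).
  have h3 : cst0 pi0 Vinf = ocst 0 pi0 Vinf by rewrite cst0E.
  rewrite h3 /cst0 in h; lra.
apply: (le_trans (y := dW_eps 0 nuX nuY Vinf + eta + A)).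
  by apply: limr_le => //; apply: nearW.
have : eta + A <= e.
  rewrite /A /eta; have -> : e * delta / 2 + e * delta / 2 / delta = e * delta / 2 + e / 2.
    by field; rewrite gt_eqF.
  have : e * delta <= e * 1 by rewrite ler_wpM2l ?(ltW e0) //; case/andP: hd.
  lra.
lra.
Qed.

Notation f e n := (dW_eps e nuX nuY (Ceps mX mY C e delta n)).
Definition MM := NN R X Y / delta + NN R X Y.

Lemma MM_ge0 : 0 <= MM.
Proof. by rewrite /MM addr_ge0 ?divr_ge0 ?NN_ge0 // ltW. Qed.

Lemma f_close (e : R) n : 0 <= e -> `|f e n - f 0 n| <= e * MM.
Proof.
move=> e0; have h := dW_eps_abs hnuX hnuY e0 (fun x y => Ceps_eps C hmX hmY hd n x y e0).
by apply: le_trans h _; rewrite /MM le_eqVlt; apply/orP; left; apply/eqP; ring.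
Qed.

Lemma f_contr (e : R) n : 0 <= e ->
  `|f e n.+1 - f e n| <= Bc mX mY C delta e * (1 - delta) ^+ n.
Proof.
move=> e0; exact: (dW_lip_abs hnuX hnuY e0 (fun x y => Ceps_contr C hmX hmY hd n x y e0)).
Qed.

Lemma f0_Z n : `|f 0 n - dW_eps 0 nuX nuY Vinf| <= B0 * (1 - delta) ^+ n / delta.
Proof.
apply: (dW_lip_abs hnuX hnuY (lexx (0:R))) => x y.
by rewrite distrC; apply: Vinf_tail.
Qed.

Lemma limf (e : R) : 0 <= e ->
  `|limn (fun n => f e n) - dW_eps 0 nuX nuY Vinf| <= e * MM.
Proof.
move=> e0.
have [_ tl] := geo_cvg hd (f := fun n => f e n) (B := Bc mX mY C delta e)
  (fun n => f_contr n e0).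
apply: (geo_le (c := (Bc mX mY C delta e + B0) / delta) q1) => n.
have := tl n; have := f_close n e0; have := f0_Z n; rewrite !ler_norml.
move=> /andP[a1 a2] /andP[b1 b2] /andP[c1 c2].
have -> : (Bc mX mY C delta e + B0) / delta * (1 - delta) ^+ n =
  Bc mX mY C delta e * (1 - delta) ^+ n / delta + B0 * (1 - delta) ^+ n / delta by ring.
apply/andP; split; lra.
Qed.

Lemma final_bound (k : natinf) (e : R) : 0 < e ->
  `|dWL_eps mX nuX mY nuY C e delta k - dWL mX nuX mY nuY C delta k| <= e * MM.
Proof.
move=> e0; case: k => [n|].
  by rewrite /dWL_eps /dWL_eps_fin dWL_fin; apply: f_close; apply: ltW.
by rewrite dWL_inf; apply: limf; apply: ltW.
Qed.

End Main.

Lemma conv_right (R : realType) (g : R -> R) (L M : R) : 0 <= M ->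
  (forall e, 0 < e -> `|g e - L| <= e * M) -> g e @[e --> 0^'+] --> L.
Proof.
move=> M0 H; apply/cvgrPdist_le => r r0.
have M1 : 0 < M + 1 by lra.
near=> e.
have e0 : 0 < e by near: e; exact: nbhs_right_gt.
have er : e < r / (M + 1) by near: e; apply: nbhs_right_lt; rewrite divr_gt0.
rewrite distrC; apply: le_trans (H e e0) _.
have : e * (M + 1) < r by rewrite -ltr_pdivlMr.
have : e * M <= e * (M + 1) by rewrite ler_wpM2l ?(ltW e0) //; lra.
lra.
Unshelve. all: by end_near.
Qed.

Unset Implicit Arguments.

Theorem theorem21 (R : realType) (X Y : finType)
  (mX : X -> X -> R) (nuX : X -> R) (mY : Y -> Y -> R) (nuY : Y -> R)
  (C : X -> Y -> R) (delta : R) (k : natinf) :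
  prob_vec nuX -> (forall x, prob_vec (mX x)) ->
  prob_vec nuY -> (forall y, prob_vec (mY y)) ->
  (forall x y, 0 <= C x y) ->
  0 < delta <= 1 ->
  dWL_eps mX nuX mY nuY C eps delta k @[eps --> 0^'+] -->
    dWL mX nuX mY nuY C delta k.
Proof.
move=> hnuX hmX hnuY hmY hC hd.
apply: (conv_right (M := MM X Y delta)); first exact: MM_ge0.
by move=> e e0; apply: final_bound.
Qed.
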